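(* Let $q$ be a prime power and let $\mathbb{F}_q$ denote the field with $q$ elements. There exist $\epsilon > 0$ and a constant $c_q < q$ such that the following holds: for every $\delta > 0$, for all sufficiently large $n$, for every set $A \subset \mathbb{F}_q^n$ with $|A| > c_q^n$ and every tuple $\mathbf{a} = (a,b,c) \in (\mathbb{F}_q\setminus\{0\})^3$ with $a+b+c=0$, we have \[ |A_{\mathbf{a}}^{\epsilon}| \ge (1-\delta)|A|, \] where \[ A_{\mathbf{a}}^{\epsilon} = \{x \in A \,:\, \text{there exist at least } |A|^{\epsilon} \text{ pairs } (y,z) \in A^2 \text{ with } ax+by+cz=0\}. \] Equivalently: there exists $\epsilon>0$ such that for every $\delta>0$, every $(\epsilon,\delta)$-cap set $A\subset \mathbb{F}_q^n$ satisfies $|A| \le c_q^n$ for sufficiently large $n$.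
   Context: For $\epsilon,\delta>0$ and a tuple $(a,b,c)\in(\mathbb{F}_q\setminus\{0\})^3$ with $a+b+c=0$, a set $A\subset\mathbb{F}_q^n$ is called an $(\epsilon,\delta)$-cap set (for the tuple $(a,b,c)$) if there exists $A'\subset A$ with $|A'|>\delta|A|$ such that for every $x\in A'$ the number of pairs $(y,z)\in A^2$ with $ax+by+cz=0$ is less than $|A|^{\epsilon}$. *)

(* Defs.v *)
From HB Require Import structures.
From Stdlib Require Import Reals.
From mathcomp Require Import all_boot all_order all_algebra all_field.
Set Implicit Arguments. Unset Strict Implicit. Unset Printing Implicit Defensive.
Import GRing.Theory.

Definition nsol (F : finFieldType) (n : nat) (A : {set 'rV[F]_n})
  (a b c : F) (x : 'rV[F]_n) : nat :=
  #|[set p : 'rV[F]_n * 'rV[F]_n |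
      [&& p.1 \in A, p.2 \in A & (a *: x + b *: p.1 + c *: p.2 == 0)%R]]|.

Definition Aeps (F : finFieldType) (n : nat) (A : {set 'rV[F]_n})
  (a b c : F) (eps : R) : {set 'rV[F]_n} :=
  [set x in A | if Rle_dec (Rpower (INR #|A|) eps) (INR (nsol A a b c x)) then true else false].

Definition admissible (F : finFieldType) (a b c : F) : bool :=
  [&& a != 0%R, b != 0%R, c != 0%R & (a + b + c == 0)%R].

(* Main.v *)
Require Import Defs.
From Stdlib Require Import Reals.
From mathcomp Require Import all_boot all_order all_algebra all_field.
From mathcomp Require Import ring lra zify.
From mathcomp Require Import Rstruct.
From Stdlib Require Import Lra.
Set Implicit Arguments. Unset Strict Implicit. Unset Printing Implicit Defensive.
Import Order.TTheory GRing.Theory Num.Theory.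

Ltac rlra := Stdlib.micromega.Lra.lra.
Ltac rnra := Stdlib.micromega.Lra.nra.
Section H_Slice.
Local Open Scope ring_scope.

Lemma rank_sum_le1 (F : fieldType) (I : finType) (P : {pred I}) m n
  (A : I -> 'M[F]_(m, n)) :
  (forall i, (\rank (A i) <= 1)%N) -> (\rank (\sum_(i in P) A i)%R <= #|P|)%N.
Proof.
move=> H; rewrite -sum1_card.
apply: (big_ind2 (fun (x : 'M[F]_(m,n)) (y : nat) => (\rank x <= y)%N)).
- by rewrite mxrank0.
- move=> x1 x2 y1 y2 h1 h2; apply: leq_trans (mxrank_add _ _) _; exact: leq_add.
- by move=> i _; apply: H.
Qed.

Lemma rank_mxsub_le (F : fieldType) m n m' n' (f : 'I_m' -> 'I_m) (g : 'I_n' -> 'I_n)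
  (A : 'M[F]_(m, n)) : (\rank (mxsub f g A) <= \rank A)%N.
Proof.
have -> : mxsub f g A = rowsub f 1%:M *m (A *m colsub g 1%:M).
  by rewrite mulmx_colsub mulmx1 -rowsubE; apply/matrixP => i j; rewrite !mxE.
apply: leq_trans (mxrankM_maxr _ _) _; exact: mxrankM_maxl.
Qed.

Lemma slice_rank (F : fieldType) (s : nat) (I : finType) (K1 K2 K3 : {pred I})
  (u1 u2 u3 : I -> 'I_s -> F) (g1 g2 g3 : I -> 'I_s -> 'I_s -> F) :
  (forall i j k, ((i == j) && (j == k))%:R =
     \sum_(p in K1) u1 p i * g1 p j k + \sum_(p in K2) u2 p j * g2 p i k
     + \sum_(p in K3) u3 p k * g3 p i j) ->
  (s <= #|K1| + #|K2| + #|K3|)%N.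
Proof.
move=> Hdec.
pose Z := \matrix_(k < s, t < #|K3|) u3 (enum_val t) k.
pose W := kermx Z.
pose r := \rank W.
pose B := row_base W.
have fullBt : row_full B^T by rewrite /row_full mxrank_tr /B (eq_row_base W).
pose f := fullrankfun fullBt.
have Pu : rowsub f B^T \in unitmx := fullrowsub_unit fullBt.
pose X : 'rV_r := const_mx 1 *m invmx ((rowsub f B^T)^T).
pose h : 'rV_s := X *m B.
have hf : forall t, h 0 (f t) = 1.
  move=> t; have : colsub f h = const_mx 1.
    rewrite /h -mulmx_colsub.
    have -> : colsub f B = (rowsub f B^T)^T by apply/matrixP => i j; rewrite !mxE.
    by rewrite /X mulmxKV // unitmx_tr.
  by move/matrixP/(_ 0 t); rewrite !mxE.
have hZ : h *m Z = 0.
  apply/sub_kermxP; rewrite /h; apply: submx_trans (submxMl _ _) _.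
  by rewrite /B (eq_row_base W).
have horth : forall p, p \in K3 -> \sum_k h 0 k * u3 p k = 0.
  move=> p Hp; move/matrixP: hZ => /(_ 0 (enum_rank_in Hp p)).
  rewrite [in X in X = _]mxE [in X in _ = X]mxE => H0; rewrite -[in RHS]H0.
  apply: eq_bigr => k _.
  have ZE : forall k t, Z k t = u3 (enum_val t) k by move=> k' t; rewrite /Z mxE.
  by rewrite ZE (enum_rankK_in Hp Hp).
pose Mx := \matrix_(i < s, j < s) \sum_k ((i == j) && (j == k))%:R * h 0 k.
have finj : injective f by apply: fullrankfun_inj.
have MxE : mxsub f f Mx = 1%:M.
  apply/matrixP => i j; rewrite !mxE (bigD1 (f j)) //= big1 ?addr0.
    by rewrite eqxx andbT (inj_eq finj) hf mulr1.
  by move=> k nk; rewrite [f j == k]eq_sym (negPf nk) andbF mul0r.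
have lower : (r <= \rank Mx)%N.
  by rewrite -{1}[r](mxrank1 F r) -MxE; apply: rank_mxsub_le.
have Mdec : Mx = (\sum_(p in K1) (\col_i u1 p i) *m (\row_j \sum_k g1 p j k * h 0 k))%R
   + (\sum_(p in K2) (\col_i \sum_k g2 p i k * h 0 k) *m (\row_j u2 p j))%R.
  apply/matrixP => i j; rewrite !mxE !summxE.
  under eq_bigr => k _ do rewrite Hdec !mulrDl.
  rewrite !big_split /=.
  have -> : \sum_(k < s) (\sum_(p in K3) u3 p k * g3 p i j) * h 0 k = 0.
    under eq_bigr => k _ do rewrite mulr_suml.
    rewrite exchange_big /= big1 // => p Hp.
    transitivity (g3 p i j * \sum_k h 0 k * u3 p k); last by rewrite horth // mulr0.
    rewrite mulr_sumr; apply: eq_bigr => k _.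
    by ring.
  rewrite addr0; congr (_ + _).
    under eq_bigr => k _ do rewrite mulr_suml.
    rewrite exchange_big /=; apply: eq_bigr => p _.
    rewrite !mxE big_ord1 !mxE mulr_sumr; apply: eq_bigr => k _; by ring.
  under eq_bigr => k _ do rewrite mulr_suml.
  rewrite exchange_big /=; apply: eq_bigr => p _.
  rewrite !mxE big_ord1 !mxE mulr_suml; apply: eq_bigr => k _.
  by ring.
have upper : (\rank Mx <= #|K1| + #|K2|)%N.
  rewrite Mdec; apply: leq_trans (mxrank_add _ _) _; apply: leq_add;
  apply: rank_sum_le1 => p; apply: leq_trans (mxrankM_maxl _ _) _; exact: rank_leq_col.
have rZ : r = (s - \rank Z)%N by rewrite /r /W mxrank_ker.
have hZK : (\rank Z <= #|K3|)%N by apply: rank_leq_col.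
have := leq_trans lower upper; rewrite rZ leq_subLR => H.
apply: leq_trans H _; rewrite addnC leq_add2l; done.
Qed.

End H_Slice.

Section H_Graph.

Lemma card_sep (T : finType) (V : {set T}) (P : pred T) :
  #|[set w in V | P w]| = \sum_(w in V) (P w : nat).
Proof.
rewrite -sum1_card big_mkcond /= [RHS]big_mkcond /=; apply: eq_bigr => w _.
by rewrite !inE; case: (w \in V); case: (P w).
Qed.

Lemma indep_set (T : finType) (N : T -> {set T}) (d : nat) (V : {set T}) :
  (forall x, x \in V -> #|[set w in V | w \in N x]| <= d) ->
  exists2 I : {set T}, I \subset V &
    (forall x y, x \in I -> y \in I -> y \in N x -> y = x) /\ #|V| <= (2*d+1) * #|I|.
Proof.
move: {2}#|V| (leqnn #|V|) => k; elim: k V => [|k IH] V.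
  rewrite leqn0 cards_eq0 => /eqP -> _; exists set0 => //; split; last by rewrite cards0.
  by move=> x y; rewrite inE.
move=> leVk HV.
have [V0|Vn0] := eqVneq V set0.
  exists set0; rewrite ?V0 ?sub0set //; split; last by rewrite cards0.
  by move=> x y; rewrite inE.
pose nb v w := (w \in N v) || (v \in N w).
pose deg v := \sum_(w in V) (nb v w : nat).
have [v vV degv] : exists2 v, v \in V & deg v <= 2 * d.
  case: (boolP [exists v in V, deg v <= 2*d]) => [/exists_inP//|/exists_inPn Hall].
  exfalso.
  have H1 : \sum_(v in V) deg v <= \sum_(v in V) (\sum_(w in V) (w \in N v : nat)
        + \sum_(w in V) (v \in N w : nat)).
    apply: leq_sum => v _; rewrite -big_split /=; apply: leq_sum => w _.
    by rewrite /nb; case: (w \in N v); case: (v \in N w).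
  have H2 : \sum_(v in V) \sum_(w in V) (v \in N w : nat) =
            \sum_(w in V) \sum_(v in V) (v \in N w : nat) by rewrite exchange_big.
  rewrite big_split /= H2 in H1.
  have H3 : forall x, x \in V -> \sum_(w in V) (w \in N x : nat) <= d.
    by move=> x xV; rewrite -card_sep; apply: HV.
  have H4 : \sum_(v in V) \sum_(w in V) (w \in N v : nat) <= \sum_(v in V) d
    by apply: leq_sum.
  have H5 : \sum_(v in V) (2 * d).+1 <= \sum_(v in V) deg v.
    by apply: leq_sum => v vV; have := Hall v vV; rewrite -ltnNge.
  rewrite !sum_nat_const in H4 H5.
  have : 0 < #|V| by rewrite card_gt0.
  move: H1 H4 H5; set a := \sum_(v in V) _; set b := \sum_(w in V) _. lia.
pose V' := [set w in V | (w != v) && ~~ nb v w].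
have V'sub : V' \subset V by apply/subsetP => w; rewrite inE => /andP[].
have cardV : #|V| <= #|V'| + (2 * d).+1.
  rewrite /V' card_sep -[#|V|]sum1_card.
  apply: leq_trans (_ : \sum_(w in V) ((w != v) && ~~ nb v w : nat)
                      + \sum_(w in V) ((w == v) + nb v w) <= _).
    rewrite -big_split /=; apply: leq_sum => w _.
    by case: (w == v); case: (nb v w).
  rewrite leq_add2l big_split /= -addn1 addnC leq_add //.
  by rewrite (bigD1 v) //= eqxx big1 ?addn0 // => w /andP[_ /negPf ->].
have V'lt : #|V'| <= k.
  have : #|V'| < #|V|.
    apply: proper_card; rewrite properEneq V'sub andbT.
    apply/negP => /eqP E; have := vV; rewrite -E /V' inE eqxx /=. by rewrite andbF.
  lia.
have HV' : forall x, x \in V' -> #|[set w in V' | w \in N x]| <= d.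
  move=> x xV; apply: leq_trans (HV x (subsetP V'sub x xV)).
  apply: subset_leq_card; apply/subsetP => w; rewrite !inE => /andP[/andP[-> _] ->] //.
have [I' I'sub [I'ind I'card]] := IH V' V'lt HV'.
exists (v |: I').
  by rewrite subUset sub1set vV (subset_trans I'sub V'sub).
have vI' : v \notin I'.
  by apply/negP => /(subsetP I'sub); rewrite inE eqxx andbF.
split; last by rewrite cardsU1 vI' /=; lia.
move=> x y; rewrite !inE => /orP[/eqP xv|xI] /orP[/eqP yv|yI]; subst.
- by [].
- move=> yN; move/(subsetP I'sub): yI; rewrite /V' inE /nb yN /=.
  by case/and3P.
- move=> vN; move/(subsetP I'sub): xI; rewrite /V' inE /nb vN /= orbT.
  by case/and3P.
- exact: I'ind.
Qed.


End H_Graph.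

Section H_Expand.
Local Open Scope ring_scope.

Lemma sum_option (R : nmodType) (J : finType) (G : option J -> R) :
  \sum_(o : option J) G o = G None + \sum_(j : J) G (Some j).
Proof.
rewrite (bigD1 None) //=; congr (_ + _).
rewrite (reindex_omap Some id); last by case.
by apply: eq_bigl => j /=; rewrite eqxx.
Qed.

Section Expand.
Variables (F : fieldType) (a b c : F) (m : nat).

Definition Jt := option ('I_m.+1 * 'I_m.+1)%type.

Definition wt (o : Jt) : F :=
  match o with
  | None => 1
  | Some (i, j) => if (j <= m - i)%N then
       - (a ^+ (m - i - j) * b ^+ j * c ^+ i *+ ('C(m, i) * 'C(m - i, j))) else 0
  end.
Definition e1 (o : Jt) : nat := match o with None => 0%N | Some (i, j) => (m - i - j)%N end.
Definition e2 (o : Jt) : nat := match o with None => 0%N | Some (i, j) => minn j (m - i) end.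
Definition e3 (o : Jt) : nat := match o with None => 0%N | Some (i, j) => nat_of_ord i end.

Lemma e_sum o : (e1 o + e2 o + e3 o <= m)%N.
Proof. case: o => [[i j]|] //=; have := ltn_ord i; have := ltn_ord j; lia. Qed.

Lemma coord_expand s t u :
  1 - (a * s + b * t + c * u) ^+ m =
  \sum_(o : Jt) wt o * s ^+ e1 o * t ^+ e2 o * u ^+ e3 o.
Proof.
rewrite sum_option /= !expr0 !mulr1 exprDn; congr (_ + _).
set G := fun p => wt (Some p) * s ^+ e1 (Some p) * t ^+ e2 (Some p) * u ^+ e3 (Some p).
have -> : \sum_(p : 'I_m.+1 * 'I_m.+1) G p = \sum_(i < m.+1) \sum_(j < m.+1) G (i, j).
  by rewrite pair_bigA; apply: eq_bigr => -[i j].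
rewrite -sumrN; apply: eq_bigr => i _.
rewrite exprDn.
rewrite (big_ord_widen m.+1 (fun j => ((a * s) ^+ (m - i - j) * (b * t) ^+ j) *+ 'C(m - i, j))); last first.
  by rewrite ltnS leq_subr.
rewrite big_mkcond /= mulr_suml -sumrMnl -sumrN.
apply: eq_bigr => j _.
rewrite /G /= ltnS; case: ifP => hj; last by rewrite mul0r mul0rn oppr0 !mul0r.
have -> : minn j (m - i) = j by apply/minn_idPl.
rewrite !exprMn !mulrnA -!mulNrn; move: (a ^+ _) (b ^+ _) (c ^+ _) (s ^+ _) (t ^+ _) (u ^+ _) ('C(m, i)) ('C(m - i, j)).
move=> A B C S T U K1 K2; ring.
Qed.
End Expand.

Section FinExpand.
Variables (F : finFieldType) (m : nat).
Hypothesis hm : #|F| = m.+1.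

Lemma m_pos : (0 < m)%N.
Proof.
have : (1 < #|F|)%N.
  rewrite (cardD1 (0 : F)) (cardD1 (1 : F)) !inE oner_neq0 /=. by [].
by rewrite hm.
Qed.

Lemma ind_pow (u : F) : (u == 0)%:R = 1 - u ^+ m.
Proof.
have [->|nz] := eqVneq u 0.
  by rewrite expr0n (negPf (lt0n_neq0 m_pos)) subr0.
have H : u ^+ m = 1.
  apply: (mulIf nz); rewrite mul1r -exprSr -hm; exact: expf_card.
by rewrite H subrr.
Qed.

Lemma vec_ind n (v : 'rV[F]_n) : (v == 0)%:R = \prod_l (1 - (v 0 l) ^+ m).
Proof.
under eq_bigr do rewrite -ind_pow.
have [->|nz] := eqVneq v 0.
  by rewrite big1 // => l _; rewrite mxE eqxx.
have : ~~ [forall l, v 0 l == 0].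
  apply: contra nz => /forallP H; apply/eqP/rowP => l; rewrite mxE; exact/eqP.
rewrite negb_forall => /existsP [l hl].
by rewrite (bigD1 l) //= (negPf hl) mul0r.
Qed.

Definition mono n (al : {ffun 'I_n -> 'I_m.+1}) (x : 'rV[F]_n) : F :=
  \prod_l (x 0 l) ^+ al l.

Definition Ex n (e : Jt m -> nat) (f : {ffun 'I_n -> Jt m}) : {ffun 'I_n -> 'I_m.+1} :=
  [ffun l => inord (e (f l))].

Lemma T_expand (a b c : F) n (x y z : 'rV[F]_n) :
  ((a *: x + b *: y + c *: z) == 0)%:R =
  \sum_(f : {ffun 'I_n -> Jt m}) (\prod_l wt a b c (f l)) *
     mono (Ex (@e1 m) f) x * mono (Ex (@e2 m) f) y * mono (Ex (@e3 m) f) z.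
Proof.
rewrite vec_ind.
under eq_bigr do rewrite !mxE coord_expand.
rewrite bigA_distr_bigA; apply: eq_bigr => f _.
rewrite /mono -!big_split /=; apply: eq_bigr => l _.
have := e_sum (f l) => hs.
rewrite !ffunE !inordK //; move: hs; set u1 := e1 _; set u2 := e2 _; set u3 := e3 _; lia.
Qed.
End FinExpand.

End H_Expand.

Section H_Cap.
Local Open Scope ring_scope.

Lemma group_sum (R : comPzRingType) (I J : finType) (P : pred I) (p : I -> J) (Q : pred J)
  (A : J -> R) (B : I -> R) : (forall i, P i -> Q (p i)) ->
  \sum_(i | P i) A (p i) * B i = \sum_(j | Q j) A j * \sum_(i | P i && (p i == j)) B i.
Proof.
move=> HQ; rewrite (partition_big p Q) //; apply: eq_bigr => j _.
by rewrite mulr_sumr; apply: eq_bigr => i /andP[_ /eqP ->].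
Qed.

Definition Kset (m n : nat) : {set {ffun 'I_n -> 'I_m.+1}} :=
  [set al : {ffun 'I_n -> 'I_m.+1} | (3 * \sum_(l < n) (al l : nat) <= n * m)%N].

Lemma cap_bound (F : finFieldType) m (hm : #|F| = m.+1) (a b c : F) n (s : nat)
  (v : 'I_s -> 'rV[F]_n) :
  (forall i j k, (a *: v i + b *: v j + c *: v k == 0) = (i == j) && (j == k)) ->
  (s <= 3 * #|Kset m n|)%N.
Proof.
move=> hdiag.
pose K := Kset m n.
pose W (f : {ffun 'I_n -> Jt m}) := \prod_l wt a b c (f l).
pose E1 := @Ex m n (@e1 m). pose E2 := @Ex m n (@e2 m). pose E3 := @Ex m n (@e3 m).
pose P1 f := E1 f \in K. pose P2 f := ~~ P1 f && (E2 f \in K).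
pose P3 f := ~~ P1 f && ~~ (E2 f \in K).
have P3K : forall f, P3 f -> E3 f \in K.
  move=> f; rewrite /P3 /P1 !inE -!ltnNge => /andP[h1 h2].
  have hs : (\sum_l ((E1 f l : nat) + E2 f l + E3 f l) <= \sum_(l < n) m)%N.
    apply: leq_sum => l _; rewrite /E1 /E2 /E3 /Ex !ffunE.
    have := e_sum (f l) => hs; rewrite !inordK; move: hs;
      set u1 := e1 _; set u2 := e2 _; set u3 := e3 _; lia.
  rewrite !big_split /= sum_nat_const card_ord in hs.
  move: h1 h2 hs; set x1 := \sum_l _; set x2 := \sum_l _; set x3 := \sum_l _.
  have H : forall x1 x2 x3 N0 : nat, (N0 < 3*x1)%N -> (N0 < 3*x2)%N ->
    (x1+x2+x3 <= N0)%N -> (3*x3 <= N0)%N by move=> *; lia.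
  exact: H.
suff : (s <= #|K| + #|K| + #|K|)%N by rewrite /K; lia.
apply: (@slice_rank F s _ (mem K) (mem K) (mem K)
  (fun p i => mono p (v i)) (fun p j => mono p (v j)) (fun p k => mono p (v k))
  (fun p j k => \sum_(f | P1 f && (E1 f == p)) W f * mono (E2 f) (v j) * mono (E3 f) (v k))
  (fun p i k => \sum_(f | P2 f && (E2 f == p)) W f * mono (E1 f) (v i) * mono (E3 f) (v k))
  (fun p i j => \sum_(f | P3 f && (E3 f == p)) W f * mono (E1 f) (v i) * mono (E2 f) (v j))).
move=> i j k.
rewrite -hdiag (T_expand hm) (bigID P1) /= [X in _ + X](bigID (fun f => E2 f \in K)) /=.
rewrite -!addrA; congr (_ + _); last congr (_ + _).
- rewrite -(group_sum (fun p => mono p (v i))) //.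
  by apply: eq_bigr => f _; rewrite /W /E1 /E2 /E3; ring.
- rewrite -(group_sum (fun p => mono p (v j)) (P := P2)); last by move=> f /andP[].
  apply: eq_bigr => f _; rewrite /W /E1 /E2 /E3; ring.
- rewrite -(group_sum (fun p => mono p (v k)) (P := P3)) //.
  apply: eq_bigr => f _; rewrite /W /E1 /E2 /E3; ring.
Qed.


End H_Cap.

Section H_Count.
Local Open Scope ring_scope.


Lemma count_K (R : realFieldType) m n (tau : R) : 0 <= tau -> tau <= 1 ->
  #|Kset m n|%:R * tau ^+ (n * m) <= (\sum_(i < m.+1) (tau ^+ 3) ^+ i) ^+ n.
Proof.
move=> t0 t1.
rewrite mulr_natl -sumr_const.
apply: le_trans (_ : \sum_(al in Kset m n) (tau ^+ 3) ^+ (\sum_(l < n) (al l : nat)) <= _).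
  apply: ler_sum => al; rewrite inE => hal.
  by rewrite -exprM; apply: ler_wiXn2l.
apply: le_trans (_ : \sum_(al : {ffun 'I_n -> 'I_m.+1}) (tau ^+ 3) ^+ (\sum_(l < n) (al l : nat)) <= _).
  rewrite [X in _ <= X](bigID (mem (Kset m n))) /= lerDl.
  by apply: sumr_ge0 => al _; apply: exprn_ge0; apply: exprn_ge0.
have -> : forall x : R, x ^+ n = \prod_(i < n) x by move=> x; rewrite prodr_const card_ord.
rewrite bigA_distr_bigA /=.
rewrite le_eqVlt; apply/orP; left; apply/eqP.
apply: eq_bigr => al _; by rewrite expr_sum.
Qed.

End H_Count.

Section H_Ineq.
Local Open Scope ring_scope.

Section Ineq.
Variable R : realFieldType.

Lemma taylor2 (s : R) k : 0 <= s -> s <= 1 ->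
  (1 - s) ^+ k <= 1 - k%:R * s + (k%:R) ^+ 2 * s ^+ 2 / 2.
Proof.
move=> s0 s1; elim: k => [|k IH]; first by rewrite expr0 mul0r subr0 expr2 !mul0r addr0.
rewrite exprS -natr1.
have h1 : 0 <= 1 - s by lra.
have h2 := ler_wpM2l h1 IH.
apply: le_trans h2 _.
have hk : 0 <= k%:R :> R by apply: ler0n.
set K := k%:R in hk *.
have : 0 <= s ^+ 2 * (1 + K ^+ 2 * s) / 2.
  apply: divr_ge0 => //; apply: mulr_ge0; first exact: sqr_ge0.
  by apply: addr_ge0 => //; apply: mulr_ge0 => //; exact: sqr_ge0.
move=> H; rewrite -subr_ge0; apply: le_trans H _; rewrite le_eqVlt; apply/orP; left.
by apply/eqP; field.
Qed.

Lemma bernoulli (s : R) k : 0 <= s -> s <= 1 -> 1 - k%:R * s <= (1 - s) ^+ k.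
Proof.
move=> s0 s1; elim: k => [|k IH]; first by rewrite expr0 mul0r subr0.
rewrite exprS -natr1.
have h1 : 0 <= 1 - s by lra.
have h2 := ler_wpM2l h1 IH.
apply: le_trans h2.
have hk : 0 <= k%:R :> R by apply: ler0n.
set K := k%:R in hk *.
have : 0 <= K * s * s by apply: mulr_ge0 => //; apply: mulr_ge0.
move=> H; rewrite -subr_ge0; apply: le_trans H _; rewrite le_eqVlt; apply/orP; left.
apply/eqP; ring.
Qed.

Lemma sum_quad (s : R) m :
  \sum_(i < m.+1) (1 - (3 * i)%N%:R * s + ((3 * i)%N%:R) ^+ 2 * s ^+ 2 / 2) =
  m.+1%:R - 3 * s * m%:R * m.+1%:R / 2 + 3 / 4 * s ^+ 2 * m%:R * m.+1%:R * (2 * m%:R + 1).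
Proof.
elim: m => [|m IH].
  rewrite big_ord1 /= muln0 expr2 !mul0r mulr0 !mul0r subr0 addr0.
  by rewrite !mulr0 !mul0r addr0.
rewrite big_ord_recr /= IH !natrM -(@natr1 R m.+1) -(@natr1 R m).
by field.
Qed.

Lemma tau_ok (m : nat) : (0 < m)%N ->
  let tau : R := 1 - (9 * m%:R)^-1 in
  0 <= tau /\ tau <= 1 /\ 0 < tau /\
  \sum_(i < m.+1) (tau ^+ 3) ^+ i < m.+1%:R * tau ^+ m.
Proof.
move=> mpos tau.
have M1 : 1 <= m%:R :> R by rewrite ler1n.
set s : R := (9 * m%:R)^-1.
have s0 : 0 < s by rewrite invr_gt0; lra.
have sM : s * m%:R = 1 / 9.
  rewrite /s; field; by rewrite pnatr_eq0 -lt0n.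
have s1 : s <= 1 / 9.
  have : s * 1 <= s * m%:R by rewrite ler_pM2l.
  lra.
split; first by rewrite /tau -/s; lra.
split; first by rewrite /tau -/s; lra.
split; first by rewrite /tau -/s; lra.
have Hsum : \sum_(i < m.+1) (tau ^+ 3) ^+ i <=
  \sum_(i < m.+1) (1 - (3 * i)%N%:R * s + ((3 * i)%N%:R) ^+ 2 * s ^+ 2 / 2).
  apply: ler_sum => i _; rewrite -exprM /tau -/s; apply: taylor2; lra.
rewrite sum_quad in Hsum.
have Hb : 1 - m%:R * s <= tau ^+ m by rewrite /tau -/s; apply: bernoulli; lra.
have E : m.+1%:R - 3 * s * m%:R * m.+1%:R / 2 + 3 / 4 * s ^+ 2 * m%:R * m.+1%:R * (2 * m%:R + 1)
   = m.+1%:R * (5/6 + (2/9 + s)/12) :> R.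
  rewrite /s -natr1; field; by rewrite pnatr_eq0 -lt0n.
rewrite E in Hsum.
have Hb' : 8 / 9 <= tau ^+ m by rewrite mulrC sM in Hb; lra.
have P0 : 0 < m.+1%:R :> R by rewrite ltr0n.
move: Hsum Hb' P0 s1; set X := \sum_(i < m.+1) _; set T := tau ^+ m; set P := m.+1%:R.
move=> *; nra.
Qed.
End Ineq.

End H_Ineq.

Open Scope R_scope.


Lemma final_ineq (lA ld l9 lP lt nn mm eps lc lG g lq NN : R) :
  lG = lP - mm * lt -> lc = (lq + lG)/2 -> g = (lq - lG)/2 -> 0 < g ->
  0 < eps -> eps < 1/2 -> eps * Rabs lc <= g/2 ->
  ld + lA + nn * mm * lt < l9 + eps * lA + nn * lP ->
  nn * lc < lA -> 0 <= nn -> NN <= nn -> NN * (g/2) > l9 - ld -> False.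
Proof.
intros HG Hc Hg gpos epos ehalf elc Hmain Hlc nn0 NNn HN.
assert (e1 : 0 < (1 - eps) * (lA - nn * lc)) by (apply Rmult_lt_0_compat; rlra).
assert (e2 : eps * lc <= g / 2).
{ apply Rle_trans with (eps * Rabs lc); [|exact elc].
  apply Rmult_le_compat_l; [rlra|apply Rle_abs]. }
assert (e3 : nn * (eps * lc) <= nn * (g / 2)) by (apply Rmult_le_compat_l; rlra).
assert (e4 : NN * (g / 2) <= nn * (g / 2)) by (apply Rmult_le_compat_r; rlra).
subst lG lc g.
rnra.
Qed.

Theorem theorem1 (F : finFieldType) :
  exists (eps cq : R), 0 < eps /\ 0 < cq /\ cq < INR #|F| /\
  forall delta : R, 0 < delta ->
  exists N : nat, forall n : nat, (N <= n)%N ->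
  forall A : {set 'rV[F]_n}, cq ^ n < INR #|A| ->
  forall a b c : F, admissible a b c ->
  (1 - delta) * INR #|A| <= INR #|Aeps A a b c eps|.
Proof.
pose m := #|F|.-1.
have hm : #|F| = m.+1.
  rewrite /m prednK //; apply/card_gt0P; by exists 0%R.
have mpos := m_pos hm.
have [t0 [t1 [tpos Hsum]]] := @tau_ok R m mpos.
move: t0 t1 tpos Hsum.
set tau := (1 - _)%R; set P := (\sum_(i < m.+1) _)%R => t0 t1 tpos Hsum.
have tpos' : 0 < tau by apply/RltP.
have tle1 : tau <= 1 by apply/RleP.
have HP : P < INR m.+1 * tau ^ m by rewrite INRE RpowE RmultE; apply/RltP.
have P1 : 1 <= P.
  apply/RleP; rewrite /P big_ord_recl expr0 Num.Theory.lerDl.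
  by apply: Num.Theory.sumr_ge0 => i _; apply: Num.Theory.exprn_ge0; apply: Num.Theory.exprn_ge0.
pose lq := ln (INR m.+1).
pose lG := ln P - INR m * ln tau.
have Ppos : 0 < P by rlra.
have mq : 0 < INR m.+1 by apply: lt_0_INR; lia.
have tm : 0 < tau ^ m by apply: pow_lt.
have lGq : lG < lq.
  have := ln_increasing _ _ Ppos HP.
  rewrite ln_mult // ln_pow //; rewrite /lG /lq; rlra.
pose g := (lq - lG) / 2.
pose lc := (lq + lG) / 2.
pose cq := exp lc.
pose D := 2 * (Rabs lc + g + 1).
pose eps := g / D.
have gpos : 0 < g by rewrite /g; rlra.
have Dpos : 0 < D by rewrite /D; have := Rabs_pos lc; rlra.
have eD : eps * D = g.
  rewrite /eps /Rdiv Rmult_assoc Rinv_l ?Rmult_1_r //; apply: Rgt_not_eq; exact: Dpos.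
have epos : 0 < eps by apply: Rdiv_lt_0_compat.
have ehalf : eps < 1/2.
  have : eps * D < (1/2) * D by rewrite eD /D; have := Rabs_pos lc; rlra.
  move=> H; apply: (Rmult_lt_reg_r D) => //.
have elc : eps * Rabs lc <= g / 2.
  have : eps * (2 * Rabs lc) <= eps * D.
    apply: Rmult_le_compat_l; first rlra. rewrite /D; rlra.
  rlra.
exists eps, cq; split; first exact: epos.
split; first exact: exp_pos.
split.
  rewrite hm /cq -(exp_ln (INR m.+1)) //; apply: exp_increasing; rewrite /lc -/lq; rlra.
move=> delta dpos.
have [N HN] := INR_archimed (g/2) (ln 9 - ln delta) (ltac:(rlra)).
exists N => n HnN A HA a b c Had.
have HnN' : INR N <= INR n by apply: le_INR; exact/ssrnat.leP.
case: (Rle_lt_dec ((1 - delta) * INR #|A|) (INR #|Aeps A a b c eps|)) => // bad.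
exfalso.
move: Had => /and4P [ha hb hc /eqP habc].
set Ae := Aeps A a b c eps.
pose B := A :\: Ae.
have AeA : Ae \subset A by apply/subsetP => x; rewrite inE => /andP[].
have cardB : INR #|B| = INR #|A| - INR #|Ae|.
  have := cardsID Ae A; rewrite (setIidPr AeA) => <-; rewrite plus_INR /B; rlra.
have Apos : 0 < INR #|A| := Rlt_trans _ _ _ (pow_lt _ n (exp_pos lc)) HA.
have HB : delta * INR #|A| < INR #|B| by rewrite cardB /Ae; rlra.
set L := Rpower (INR #|A|) eps.
have Bsmall : forall x, x \in B -> INR (nsol A a b c x) < L.
  move=> x; rewrite /B /Ae /Aeps !inE => /andP[hx xA]; move: hx; rewrite xA /=.
  by case: Rle_dec => // h _; apply: Rnot_le_lt.
pose solset (x : 'rV[F]_n) := [set p : 'rV[F]_n * 'rV[F]_n |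
   [&& p.1 \in A, p.2 \in A & (a *: x + b *: p.1 + c *: p.2 == 0)%R]].
have nsolE : forall x, nsol A a b c x = #|solset x| by [].
pose Nb x := [set p.1 | p in solset x].
pose d := (\max_(x in B) nsol A a b c x)%N.
have HV : forall x, x \in B -> (#|[set w in B | w \in Nb x]| <= d)%N.
  move=> x xB; apply: (@leq_trans #|Nb x|).
    by apply: subset_leq_card; apply/subsetP => w; rewrite inE => /andP[].
  apply: leq_trans (leq_imset_card _ _) _; rewrite -nsolE; exact: leq_bigmax_cond.
have [I IB [Iind Icard]] := indep_set HV.
have Bpos : (0 < #|B|)%N.
  rewrite lt0n; apply/eqP => B0; move: HB; rewrite B0 /= => HB0.
  have := Rmult_lt_0_compat _ _ dpos Apos => H0; exact: (Rlt_asym _ _ H0 HB0).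
have [x0 x0B dE] := eq_bigmax_cond (fun x => nsol A a b c x) Bpos.
have Hd : INR d < L by rewrite /d dE; apply: Bsmall.
pose v (i : 'I_#|I|) := enum_val i.
have vI : forall i, v i \in I := fun i => enum_valP i.
have vA : forall i, v i \in A.
  move=> i0; have := subsetP IB _ (vI i0); rewrite inE; by case/andP.
have hdiag : forall i j k, (a *: v i + b *: v j + c *: v k == 0)%R = (i == j) && (j == k).
  move=> i j k; apply/idP/idP.
  - move=> /eqP E.
    have yN : v j \in Nb (v i).
      apply/imsetP; exists (v j, v k) => //=; by rewrite inE /= !vA E eqxx.
    have ji := Iind _ _ (vI i) (vI j) yN.
    rewrite ji in E.
    have ab : (a + b = - c)%R by rewrite -[(a + b)%R](GRing.addrK c) habc GRing.sub0r.
    rewrite -GRing.scalerDl ab GRing.scaleNr in E.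
    have E' : (c *: v k = c *: v i)%R.
      by apply/eqP; rewrite -GRing.subr_eq0 GRing.addrC E.
    have ki := scalerI hc E'.
    by apply/andP; split; apply/eqP; apply: enum_val_inj; rewrite -/(v _) ?ji ?ki.
  - by case/andP => /eqP <- /eqP <-; rewrite -!GRing.scalerDl habc GRing.scale0r.
have Icap := cap_bound hm hdiag.
have HK := count_K m n t0 t1.
have HBI : INR #|B| <= (2 * INR d + 1) * INR #|I|.
  have := le_INR _ _ (ssrnat.leP Icard); rewrite mult_INR plus_INR mult_INR /=; rlra.
have HIK : INR #|I| <= 3 * INR #|Kset m n|.
  have := le_INR _ _ (ssrnat.leP Icap); rewrite mult_INR /=; rlra.
have HKP : INR #|Kset m n| * tau ^ (n * m) <= P ^ n.
  by rewrite INRE !RpowE RmultE; apply/RleP.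
have Ar1 : 1 <= INR #|A|.
  case E: #|A| Apos => [|k]; first by rewrite /=; rlra.
  move=> _; rewrite S_INR; have := pos_INR k; rlra.
have lnA0 : 0 <= ln (INR #|A|).
  case: (Rle_lt_or_eq_dec _ _ Ar1) => h; last by rewrite -h ln_1; rlra.
  rewrite -ln_1; apply: Rlt_le; apply: ln_increasing => //; rlra.
have lnL : ln L = eps * ln (INR #|A|) by rewrite /L /Rpower ln_exp.
have L1 : 1 <= L.
  have := exp_ineq1_le (eps * ln (INR #|A|)); rewrite /L /Rpower.
  have : 0 <= eps * ln (INR #|A|) by apply: Rmult_le_pos; rlra.
  rlra.
have d0 := pos_INR d.
have K0 := pos_INR #|Kset m n|.
have I0 := pos_INR #|I|.
have H9 : delta * INR #|A| < 9 * L * INR #|Kset m n|.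
  have h1 : (2 * INR d + 1) * INR #|I| <= (2 * INR d + 1) * (3 * INR #|Kset m n|).
    by apply: Rmult_le_compat_l; rlra.
  have h2 : (2 * INR d + 1) * (3 * INR #|Kset m n|) <= (3 * L) * (3 * INR #|Kset m n|).
    by apply: Rmult_le_compat_r; rlra.
  rlra.
have tnm : 0 < tau ^ (n * m) by apply: pow_lt.
have H9' : delta * INR #|A| * tau ^ (n * m) < 9 * L * P ^ n.
  apply: Rlt_le_trans (_ : 9 * L * INR #|Kset m n| * tau ^ (n * m) <= _).
    by apply: Rmult_lt_compat_r.
  rewrite Rmult_assoc; apply: Rmult_le_compat_l; rlra.
have lhs0 : 0 < delta * INR #|A| * tau ^ (n * m).
  by apply: Rmult_lt_0_compat => //; apply: Rmult_lt_0_compat.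
have := ln_increasing _ _ lhs0 H9'.
have Lpos : 0 < L by rlra.
have Pn : 0 < P ^ n by apply: pow_lt.
rewrite !ln_mult //; try rlra; try (apply: Rmult_lt_0_compat; rlra).
rewrite !ln_pow // lnL mult_INR => Hmain.
have Hlc : INR n * lc < ln (INR #|A|).
  have := ln_increasing _ _ (pow_lt _ n (exp_pos lc)) HA.
  by rewrite ln_pow ?ln_exp //; apply: exp_pos.
apply: (@final_ineq (ln (INR #|A|)) (ln delta) (ln 9) (ln P)
  (ln tau) (INR n) (INR m) eps lc lG g lq (INR N)) => //.
exact: pos_INR.
Qed.
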